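(* Every vulnerable directed $st$-graph is edge-weak.
   Context: A directed $st$-graph $G=(V,E,s,t)$ is a finite directed graph with no self-loops and no parallel edges, with distinct source $s$ (no incoming edges) and sink $t$ (no outgoing edges), such that every vertex lies on some directed walk from $s$ to $t$. Vulnerability: $P(G)$ is the set of directed $s$–$t$ walks; a flow is a finitely supported $\varphi:P(G)\to\mathbb{R}_{\ge0}$ inducing $\varphi(e)=\sum_p(\text{occurrences of }e\text{ in }p)\varphi(p)$; a latency function assigns each edge a continuous non-decreasing $l_e:\mathbb{R}_{\ge0}\to\mathbb{R}_{\ge0}$ with $l_p(\varphi)=\sum_{e\in p}l_e(\varphi(e))$; $\varphi$ of total value $r$ is a Wardrop flow for $(G,r,l)$ if $l_p(\varphi)\le l_q(\varphi)$ whenever $\varphi(p)>0$; $L(G,r,l)$ is the common latency of used paths ($0$ if $r=0$); $G$ is vulnerable if $L(G,r,l)>L(H,r,l|_H)$ for some $r$, $l$ and subgraph $H$ with the same source and sink. Edge-weakness: given capacities $c:E\to\mathbb{R}_{\ge0}$, a flow is $f:E\to\mathbb{R}_{\ge0}$ with $f(e)\le c_e$ and conservation at vertices other than $s,t$, of value $\sum_{e\in out(s)}f(e)$; $f$ is saturating if every $s$–$t$ walk contains an edge with $f(e)=c_e$; $G$ is edge-weak if for some capacities there is a saturating flow of value strictly less than the maximum flow value. *)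

(* Defs.v *)
From Stdlib Require Import Reals List Arith.
Import ListNotations.
Open Scope R_scope.

(* A directed edge is an ordered pair of vertices (vertices are nats).
   Representing edges as pairs + NoDup on the edge list = no parallel edges. *)
Definition edge := (nat * nat)%type.

Definition edge_eq_dec : forall x y : edge, {x = y} + {x <> y}.
Proof. decide equality; apply Nat.eq_dec. Defined.

Fixpoint walk (E : list edge) (u : nat) (p : list edge) (v : nat) : Prop :=
  match p with
  | [] => u = v
  | e :: p' => In e E /\ fst e = u /\ walk E (snd e) p' v
  end.

Definition is_st_graph (V : list nat) (E : list edge) (s t : nat) : Prop :=
  NoDup V /\ NoDup E /\
  (forall e, In e E -> In (fst e) V /\ In (snd e) V /\ fst e <> snd e) /\
  In s V /\ In t V /\ s <> t /\
  (forall e, In e E -> snd e <> s) /\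
  (forall e, In e E -> fst e <> t) /\
  (forall v, In v V -> exists p1 p2, walk E s p1 v /\ walk E v p2 t).

Definition sumR (l : list R) : R := fold_right Rplus 0 l.

(* A finitely supported path flow: a finite list of (walk, amount) pairs;
   the flow on a walk p is the sum of the amounts attached to p. *)
Definition pflow := list (list edge * R).

Definition path_value (phi : pflow) (p : list edge) : R :=
  sumR (map (fun pv => if list_eq_dec edge_eq_dec (fst pv) p then snd pv else 0) phi).

Definition edge_load (phi : pflow) (e : edge) : R :=
  sumR (map (fun pv => INR (count_occ edge_eq_dec (fst pv) e) * snd pv) phi).

Definition flow_value (phi : pflow) : R := sumR (map snd phi).

Definition path_lat (l : edge -> R -> R) (phi : pflow) (p : list edge) : R :=
  sumR (map (fun e => l e (edge_load phi e)) p).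

Definition is_path_flow (E : list edge) (s t : nat) (phi : pflow) : Prop :=
  forall pv, In pv phi -> walk E s (fst pv) t /\ 0 <= snd pv.

Definition is_wardrop (E : list edge) (s t : nat) (r : R) (l : edge -> R -> R)
    (phi : pflow) : Prop :=
  is_path_flow E s t phi /\ flow_value phi = r /\
  (forall p q, 0 < path_value phi p -> walk E s q t ->
     path_lat l phi p <= path_lat l phi q).

(* [wardrop_latency E s t r l c]: c is L(G,r,l), i.e. there is a Wardrop flow
   and c is the common latency of its used paths (0 if r = 0). *)
Definition wardrop_latency (E : list edge) (s t : nat) (r : R)
    (l : edge -> R -> R) (c : R) : Prop :=
  exists phi, is_wardrop E s t r l phi /\
    ((r = 0 /\ c = 0) \/
     (0 < r /\ exists p, 0 < path_value phi p /\ c = path_lat l phi p)).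

Definition cont_nonneg (f : R -> R) : Prop :=
  forall x, 0 <= x -> forall eps, 0 < eps -> exists delta, 0 < delta /\
    forall y, 0 <= y -> Rabs (y - x) < delta -> Rabs (f y - f x) < eps.

Definition latency_fn (E : list edge) (l : edge -> R -> R) : Prop :=
  forall e, In e E ->
    (forall x, 0 <= x -> 0 <= l e x) /\
    (forall x y, 0 <= x -> x <= y -> l e x <= l e y) /\
    cont_nonneg (l e).

(* Subgraph H with the same source and sink is given by its edge set EH ⊆ E. *)
Definition vulnerable (V : list nat) (E : list edge) (s t : nat) : Prop :=
  exists (r : R) (l : edge -> R -> R) (EH : list edge) (cG cH : R),
    0 <= r /\ latency_fn E l /\ incl EH E /\
    wardrop_latency E s t r l cG /\ wardrop_latency EH s t r l cH /\ cH < cG.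

Definition in_sum (E : list edge) (f : edge -> R) (v : nat) : R :=
  sumR (map f (filter (fun e => Nat.eqb (snd e) v) E)).
Definition out_sum (E : list edge) (f : edge -> R) (v : nat) : R :=
  sumR (map f (filter (fun e => Nat.eqb (fst e) v) E)).

Definition is_edge_flow (V : list nat) (E : list edge) (s t : nat)
    (c f : edge -> R) : Prop :=
  (forall e, In e E -> 0 <= f e /\ f e <= c e) /\
  (forall v, In v V -> v <> s -> v <> t -> in_sum E f v = out_sum E f v).

Definition edge_flow_value (E : list edge) (s : nat) (f : edge -> R) : R :=
  out_sum E f s.

Definition saturating (E : list edge) (s t : nat) (c f : edge -> R) : Prop :=
  forall p, walk E s p t -> exists e, In e p /\ f e = c e.

(* value of f strictly less than the max-flow value  <=>  some feasible flow
   has strictly larger value *)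
Definition edge_weak (V : list nat) (E : list edge) (s t : nat) : Prop :=
  exists c : edge -> R, (forall e, In e E -> 0 <= c e) /\
    exists f, is_edge_flow V E s t c f /\ saturating E s t c f /\
      exists g, is_edge_flow V E s t c g /\
        edge_flow_value E s f < edge_flow_value E s g.

(* Main.v *)
Require Import Defs.
From Stdlib Require Import Reals List.
From Stdlib Require Import Lra Lia Arith Classical ClassicalEpsilon.
Import ListNotations.
Open Scope R_scope.

Lemma sumR_app l1 l2 : sumR (l1 ++ l2) = sumR l1 + sumR l2.
Proof. induction l1; simpl; [lra | rewrite IHl1; lra]. Qed.

Lemma sumR_map_ext {A} (f g : A -> R) l :
  (forall a, In a l -> f a = g a) -> sumR (map f l) = sumR (map g l).
Proof. induction l; simpl; intros H; auto. rewrite H by auto. rewrite IHl; auto. Qed.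

Lemma sumR_map_add {A} (f g : A -> R) l :
  sumR (map (fun a => f a + g a) l) = sumR (map f l) + sumR (map g l).
Proof. induction l; simpl; [lra | rewrite IHl; lra]. Qed.

Lemma sumR_map_scal {A} c (f : A -> R) l :
  sumR (map (fun a => c * f a) l) = c * sumR (map f l).
Proof. induction l; simpl; [lra | rewrite IHl; lra]. Qed.

Lemma sumR_zero {A} (l : list A) : sumR (map (fun _ => 0) l) = 0.
Proof. induction l; simpl; [lra | rewrite IHl; lra]. Qed.

Lemma sumR_nonneg {A} (f : A -> R) l :
  (forall a, In a l -> 0 <= f a) -> 0 <= sumR (map f l).
Proof. induction l; simpl; intros H; [lra|]. assert (0 <= f a) by auto.
  assert (0 <= sumR (map f l)) by auto. lra. Qed.

Lemma sumR_le_elem {A} (f : A -> R) l a :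
  (forall a, In a l -> 0 <= f a) -> In a l -> f a <= sumR (map f l).
Proof. induction l as [|b l IH]; simpl; intros H Ha; [contradiction|].
  destruct Ha as [<-|Ha].
  - assert (0 <= sumR (map f l)) by (apply sumR_nonneg; auto). lra.
  - assert (0 <= f b) by auto. assert (f a <= sumR (map f l)) by auto. lra. Qed.

Lemma sumR_pos_ex {A} (f : A -> R) l :
  0 < sumR (map f l) -> exists a, In a l /\ 0 < f a.
Proof. induction l as [|b l IH]; simpl; intros H; [lra|].
  destruct (Rlt_dec 0 (f b)) as [Hb|Hb]. exists b; auto.
  destruct IH as [a [? ?]]. lra. exists a; auto. Qed.

Lemma walk_app E u p1 w p2 v :
  walk E u p1 w -> walk E w p2 v -> walk E u (p1 ++ p2) v.
Proof. revert u; induction p1; simpl; intros u H1 H2.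
  - subst; auto.
  - destruct H1 as [? [? ?]]. repeat split; eauto. Qed.

Lemma walk_split E u p1 p2 v :
  walk E u (p1 ++ p2) v -> exists w, walk E u p1 w /\ walk E w p2 v.
Proof. revert u; induction p1; simpl; intros u H.
  - exists u; auto.
  - destruct H as [? [? H]]. destruct (IHp1 _ H) as [w [? ?]]. exists w; auto. Qed.

Lemma walk_incl E E' u p v : incl E E' -> walk E u p v -> walk E' u p v.
Proof. revert u; induction p; simpl; intros u Hi H; auto.
  destruct H as [? [? ?]]. repeat split; auto. Qed.

Lemma walk_edges E u p v : walk E u p v -> forall e, In e p -> In e E.
Proof. revert u; induction p; simpl; intros u H e He; [contradiction|].
  destruct H as [? [? ?]]. destruct He; subst; eauto. Qed.

Lemma walk_cross (P : nat -> Prop) E u p v :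
  walk E u p v -> P u -> ~ P v -> exists e, In e p /\ P (fst e) /\ ~ P (snd e).
Proof. revert u; induction p; simpl; intros u H Pu Pv.
  - subst; contradiction.
  - destruct H as [Hin [Hf Hw]]. destruct (classic (P (snd a))) as [Ha|Ha].
    + destruct (IHp _ Hw Ha Pv) as [e [? ?]]. exists e; auto.
    + exists a. subst; auto. Qed.

Lemma walk_balance E u p w v : walk E u p w ->
  (length (filter (fun e => Nat.eqb (snd e) v) p) + (if Nat.eqb u v then 1 else 0)
   = length (filter (fun e => Nat.eqb (fst e) v) p) + (if Nat.eqb w v then 1 else 0))%nat.
Proof. revert u; induction p as [|a p IH]; simpl; intros u H.
  - subst; lia.
  - destruct H as [_ [Hf Hw]]. specialize (IH _ Hw). subst u.
    destruct (Nat.eqb (snd a) v), (Nat.eqb (fst a) v); simpl; lia. Qed.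

Lemma filter_none (P : edge -> bool) p :
  (forall e, In e p -> P e = false) -> length (filter P p) = 0%nat.
Proof. induction p; simpl; intros H; auto. rewrite H by auto. auto. Qed.

Lemma ind_notin a l : ~ In a l ->
  sumR (map (fun e => if edge_eq_dec a e then 1 else 0) l) = 0.
Proof. intros H. rewrite (sumR_map_ext _ (fun _ => 0)). apply sumR_zero.
  intros e He. destruct (edge_eq_dec a e); subst; [contradiction|auto]. Qed.

Lemma ind_in a l : NoDup l -> In a l ->
  sumR (map (fun e => if edge_eq_dec a e then 1 else 0) l) = 1.
Proof. induction l as [|b l IH]; simpl; intros Hnd Ha; [contradiction|].
  inversion Hnd; subst. destruct (edge_eq_dec a b).
  - subst. rewrite ind_notin; auto; lra.
  - destruct Ha; [congruence|]. rewrite IH; auto; lra. Qed.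

Lemma count_sum (P : edge -> bool) E p : NoDup E -> incl p E ->
  sumR (map (fun e => INR (count_occ edge_eq_dec p e)) (filter P E))
  = INR (length (filter P p)).
Proof. induction p as [|a p IH]; intros HE Hp.
  - simpl. apply sumR_zero.
  - rewrite (sumR_map_ext _ (fun e => INR (count_occ edge_eq_dec p e) +
                 (if edge_eq_dec a e then 1 else 0))).
    2:{ intros e _. simpl. destruct (edge_eq_dec a e); [rewrite S_INR|]; lra. }
    rewrite sumR_map_add. rewrite IH; auto.
    2:{ intros e He; apply Hp; simpl; auto. }
    assert (HaE : In a E) by (apply Hp; simpl; auto).
    cbn [filter]. destruct (P a) eqn:Pa.
    + rewrite ind_in; [cbn [length]; rewrite S_INR; lra | apply NoDup_filter; auto |].
      apply filter_In; auto.
    + rewrite ind_notin; [lra|]. rewrite filter_In. intros [_ H]; congruence. Qed.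

Lemma sum_load phi L : sumR (map (edge_load phi) L) =
  sumR (map (fun pv => snd pv * sumR (map (fun e => INR (count_occ edge_eq_dec (fst pv) e)) L)) phi).
Proof. induction phi as [|pv phi IH].
  - simpl. unfold edge_load. simpl. apply sumR_zero.
  - simpl. rewrite <- IH. rewrite <- sumR_map_scal. rewrite <- sumR_map_add.
    apply sumR_map_ext. intros e _. unfold edge_load. simpl. lra. Qed.

Lemma load_in_sum E phi v : NoDup E -> (forall pv, In pv phi -> incl (fst pv) E) ->
  in_sum E (edge_load phi) v =
  sumR (map (fun pv => snd pv * INR (length (filter (fun e => Nat.eqb (snd e) v) (fst pv)))) phi).
Proof. intros HE Hp. unfold in_sum. rewrite sum_load. apply sumR_map_ext.
  intros pv Hpv. rewrite count_sum; auto. Qed.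

Lemma load_out_sum E phi v : NoDup E -> (forall pv, In pv phi -> incl (fst pv) E) ->
  out_sum E (edge_load phi) v =
  sumR (map (fun pv => snd pv * INR (length (filter (fun e => Nat.eqb (fst e) v) (fst pv)))) phi).
Proof. intros HE Hp. unfold out_sum. rewrite sum_load. apply sumR_map_ext.
  intros pv Hpv. rewrite count_sum; auto. Qed.

Lemma load_conserv E s t phi v : NoDup E ->
  (forall pv, In pv phi -> walk E s (fst pv) t) -> v <> s -> v <> t ->
  in_sum E (edge_load phi) v = out_sum E (edge_load phi) v.
Proof. intros HE Hw Hs Ht.
  assert (Hi : forall pv, In pv phi -> incl (fst pv) E)
    by (intros pv Hpv e He; eapply walk_edges; eauto).
  rewrite load_in_sum, load_out_sum; auto. apply sumR_map_ext. intros pv Hpv.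
  pose proof (walk_balance _ _ _ _ v (Hw pv Hpv)) as B.
  replace (Nat.eqb s v) with false in B by (symmetry; apply Nat.eqb_neq; auto).
  replace (Nat.eqb t v) with false in B by (symmetry; apply Nat.eqb_neq; auto).
  f_equal. f_equal. rewrite !Nat.add_0_r in B. exact B. Qed.

Lemma load_value E s t phi : NoDup E -> s <> t ->
  (forall e, In e E -> snd e <> s) ->
  (forall pv, In pv phi -> walk E s (fst pv) t) ->
  out_sum E (edge_load phi) s = flow_value phi.
Proof. intros HE Hst Hns Hw.
  assert (Hi : forall pv, In pv phi -> incl (fst pv) E)
    by (intros pv Hpv e He; eapply walk_edges; eauto).
  rewrite load_out_sum; auto. unfold flow_value. apply sumR_map_ext. intros pv Hpv.
  pose proof (walk_balance _ _ _ _ s (Hw pv Hpv)) as B.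
  rewrite Nat.eqb_refl in B.
  replace (Nat.eqb t s) with false in B by (symmetry; apply Nat.eqb_neq; auto).
  rewrite filter_none in B.
  2:{ intros e He. apply Nat.eqb_neq. apply Hns. eapply walk_edges; eauto. }
  simpl in B. rewrite Nat.add_0_r in B.
  match goal with |- context [INR ?n] => replace n with 1%nat by exact B end.
  change (INR 1) with 1. apply Rmult_1_r. Qed.

Lemma load_nonneg phi e : (forall pv, In pv phi -> 0 <= snd pv) -> 0 <= edge_load phi e.
Proof. intros H. unfold edge_load. apply sumR_nonneg. intros pv Hpv.
  apply Rmult_le_pos; [apply pos_INR | auto]. Qed.

Lemma path_lat_app l phi p1 p2 :
  path_lat l phi (p1 ++ p2) = path_lat l phi p1 + path_lat l phi p2.
Proof. unfold path_lat. rewrite map_app, sumR_app. auto. Qed.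

Lemma path_lat_cons l phi e p :
  path_lat l phi (e :: p) = l e (edge_load phi e) + path_lat l phi p.
Proof. reflexivity. Qed.

Lemma path_lat_nil l phi : path_lat l phi [] = 0.
Proof. reflexivity. Qed.

Lemma path_lat_nonneg E l phi u p v : latency_fn E l ->
  (forall pv, In pv phi -> 0 <= snd pv) -> walk E u p v -> 0 <= path_lat l phi p.
Proof. intros Hl Hphi Hw. unfold path_lat. apply sumR_nonneg. intros e He.
  apply (proj1 (Hl e (walk_edges _ _ _ _ Hw e He))). apply load_nonneg; auto. Qed.

Lemma eps_exists (P : edge -> Prop) (x y : edge -> R) L :
  (forall e, In e L -> P e -> 0 <= y e /\ 0 <= x e /\ (y e = 0 \/ y e < x e)) ->
  exists eps, 0 < eps <= 1 /\ forall e, In e L -> P e -> (1+eps) * y e <= x e.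
Proof. induction L as [|a L IH]; intros H.
  - exists 1. split; [lra|]. intros e [].
  - destruct IH as [eps [Heps He]]. { intros e Hin; apply H; simpl; auto. }
    destruct (classic (P a /\ 0 < y a /\ y a < x a)) as [Ha|Ha].
    + destruct Ha as [Pa [Hy Hyx]].
      set (ea := (x a - y a) / y a).
      assert (Hea : 0 < ea) by (unfold ea; apply Rdiv_lt_0_compat; lra).
      assert (Hxa : (1 + ea) * y a = x a) by (unfold ea; field; lra).
      exists (Rmin eps ea). split.
      { split; [apply Rmin_pos; lra|]. pose proof (Rmin_l eps ea); lra. }
      intros e [Hae|Hin] Pe; [subst e|].
      * pose proof (Rmin_r eps ea).
        assert ((1 + Rmin eps ea) * y a <= (1 + ea) * y a) by (apply Rmult_le_compat_r; lra).
        lra.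
      * pose proof (Rmin_l eps ea). destruct (H e (or_intror Hin) Pe) as [Hy0 _].
        assert ((1 + Rmin eps ea) * y e <= (1 + eps) * y e) by (apply Rmult_le_compat_r; lra).
        specialize (He e Hin Pe). lra.
    + exists eps. split; auto. intros e [Hae|Hin] Pe; [subst e|]; auto.
      destruct (H a (or_introl eq_refl) Pe) as [Hy [Hx [Hz|Hz]]].
      * rewrite Hz. lra.
      * destruct Hy as [Hy|Hy]; [exfalso; apply Ha; auto|]. rewrite <- Hy. lra. Qed.

Lemma in_sum_scal E c f v : in_sum E (fun e => c * f e) v = c * in_sum E f v.
Proof. unfold in_sum. apply sumR_map_scal. Qed.

Lemma out_sum_scal E c f v : out_sum E (fun e => c * f e) v = c * out_sum E f v.
Proof. unfold out_sum. apply sumR_map_scal. Qed.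

Lemma pv_pos_path (phi : pflow) p : 0 < path_value phi p ->
  exists pv, In pv phi /\ fst pv = p /\ 0 < snd pv.
Proof. unfold path_value. intros H. destruct (sumR_pos_ex _ _ H) as [pv [Hin Hp]].
  destruct (list_eq_dec edge_eq_dec (fst pv) p); [|lra]. exists pv; auto. Qed.

Lemma path_value_ge (phi : pflow) pv : (forall pv, In pv phi -> 0 <= snd pv) ->
  In pv phi -> snd pv <= path_value phi (fst pv).
Proof. intros H Hin. unfold path_value.
  pose proof (sumR_le_elem (fun pv' => if list_eq_dec edge_eq_dec (fst pv') (fst pv) then snd pv' else 0) phi pv) as K.
  simpl in K. destruct (list_eq_dec edge_eq_dec (fst pv) (fst pv)); [|congruence].
  apply K; auto. intros a Ha. destruct (list_eq_dec edge_eq_dec (fst a) (fst pv)); auto. lra. Qed.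

Theorem theorem7 (V : list nat) (E : list edge) (s t : nat) :
  is_st_graph V E s t -> vulnerable V E s t -> edge_weak V E s t.
Proof.
  intros [HVnd [HEnd [HEend [HsV [HtV [Hst [Hnos [Hnot Hreach]]]]]]]]
         [r [l [EH [cG [cH [Hr [Hl [Hinc [[phi [HWG HcG]] [[psi [HWH HcH]] Hlt]]]]]]]]]].
  destruct HWG as [HpfG [HvG HwG]]. destruct HWH as [HpfH [HvH HwH]].
  destruct HcG as [[Hr0 HcG0]|[Hrpos [p0 [Hp0 HcG]]]].
  { destruct HcH as [[_ ?]|[? _]]; lra. }
  destruct HcH as [[? _]|[_ [q0 [Hq0 HcH]]]]; [lra|].
  assert (HaG : forall pv, In pv phi -> 0 <= snd pv) by (intros pv Hpv; apply (HpfG pv Hpv)).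
  assert (HaH : forall pv, In pv psi -> 0 <= snd pv) by (intros pv Hpv; apply (HpfH pv Hpv)).
  assert (HwpG : forall pv, In pv phi -> walk E s (fst pv) t) by (intros pv Hpv; apply (HpfG pv Hpv)).
  assert (HwpHH : forall pv, In pv psi -> walk EH s (fst pv) t) by (intros pv Hpv; apply (HpfH pv Hpv)).
  assert (HwpH : forall pv, In pv psi -> walk E s (fst pv) t)
    by (intros pv Hpv; eapply walk_incl; eauto).
  set (x := edge_load phi). set (y := edge_load psi).
  assert (Hx0 : forall e, 0 <= x e) by (intros; apply load_nonneg; auto).
  assert (Hy0 : forall e, 0 <= y e) by (intros; apply load_nonneg; auto).
  assert (Hq0w : walk EH s q0 t).
  { destruct (pv_pos_path _ _ Hq0) as [pv [Hpv [<- _]]]. auto. }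
  assert (Hused : forall p, 0 < path_value psi p -> walk EH s p t /\ path_lat l psi p = cH).
  { intros p Hp. destruct (pv_pos_path _ _ Hp) as [pv [Hpv [<- _]]].
    split; auto. pose proof (HwH _ _ Hp Hq0w). pose proof (HwH _ _ Hq0 (HwpHH pv Hpv)). lra. }
  set (U := fun v => ~ (exists q', walk EH s q' v /\ exists d, 0 < d /\
              forall q, walk E s q v -> path_lat l psi q' + d <= path_lat l phi q)).
  assert (HUs : U s).
  { intros [q' [Hq' [d [Hd Hq]]]]. specialize (Hq [] eq_refl).
    assert (0 <= path_lat l psi q').
    { apply (path_lat_nonneg E l psi s q' s); auto. eapply walk_incl; eauto. }
    unfold path_lat at 2 in Hq. simpl in Hq. lra. }
  assert (HUt : ~ U t).
  { intros HU. apply HU. exists q0. split; auto. exists (cG - cH). split; [lra|].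
    intros q Hq. pose proof (HwG _ _ Hp0 Hq). lra. }
  assert (Hfwd : forall e, In e E -> U (fst e) -> ~ U (snd e) -> y e = 0 \/ y e < x e).
  { intros e He Hu Hv. destruct (Hy0 e) as [Hye|Hye]; [right|left; auto].
    unfold y, edge_load in Hye. destruct (sumR_pos_ex _ _ Hye) as [pv [Hpv Hpos]].
    pose proof (pos_INR (count_occ edge_eq_dec (fst pv) e)) as Hc.
    pose proof (HaH pv Hpv) as Ha.
    assert (Hc' : 0 < INR (count_occ edge_eq_dec (fst pv) e)).
    { destruct Hc as [Hc|Hc]; auto. rewrite <- Hc in Hpos. lra. }
    assert (Ha' : 0 < snd pv).
    { destruct Ha as [Ha|Ha]; auto. rewrite <- Ha in Hpos. lra. }
    assert (HeIn : In e (fst pv)).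
    { apply (count_occ_In edge_eq_dec). apply INR_lt. simpl. auto. }
    assert (Hpval : 0 < path_value psi (fst pv)) by (pose proof (path_value_ge psi pv HaH Hpv); lra).
    destruct (Hused _ Hpval) as [Hpw Hplat].
    destruct (in_split _ _ HeIn) as [p1 [p2 Hsplit]].
    rewrite Hsplit in Hpw, Hplat, Hpval.
    destruct (walk_split _ _ _ _ _ Hpw) as [w [Hp1 Hp2]].
    destruct Hp2 as [HeH [Hfe Hp2]]. subst w.
    apply NNPP in Hv. destruct Hv as [q' [Hq' [d [Hd Hq]]]].
    destruct (classic (forall q, walk E s q (fst e) -> path_lat l psi p1 + d <= path_lat l phi q)) as [Hall|Hall].
    { exfalso. apply Hu. exists p1. split; auto. exists d; auto. }
    apply not_all_ex_not in Hall. destruct Hall as [qu Hqu].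
    apply imply_to_and in Hqu. destruct Hqu as [Hquw Hqul]. apply Rnot_le_lt in Hqul.
    assert (Hw1 : walk E s (qu ++ [e]) (snd e)).
    { apply walk_app with (fst e); auto. simpl. auto. }
    specialize (Hq _ Hw1). rewrite path_lat_app in Hq.
    assert (Hw2 : walk EH s (q' ++ p2) t) by (apply walk_app with (snd e); auto).
    pose proof (HwH _ _ Hpval Hw2) as Hcmp.
    rewrite path_lat_app in Hcmp. rewrite path_lat_app in Hcmp.
    rewrite path_lat_cons in Hcmp. rewrite path_lat_cons, path_lat_nil in Hq.
    fold x in Hq. fold y in Hcmp.
    assert (Hlat : l e (y e) < l e (x e)) by lra.
    destruct (Rlt_le_dec (y e) (x e)) as [Hlt'|Hge]; auto.
    exfalso. destruct (Hl e He) as [_ [Hmono _]].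
    pose proof (Hmono (x e) (y e) (Hx0 e) Hge). lra. }
  destruct (eps_exists (fun e => U (fst e) /\ ~ U (snd e)) x y E) as [eps [Heps Hepsp]].
  { intros e He [Hu Hv]. repeat split; auto. }
  set (M := 1 + 2 * (sumR (map x E) + sumR (map y E))).
  assert (HxM : forall e, In e E -> x e <= M).
  { intros e He. pose proof (sumR_le_elem x E e (fun a _ => Hx0 a) He).
    pose proof (sumR_nonneg y E (fun a _ => Hy0 a)). pose proof (Hx0 e). unfold M. lra. }
  assert (HyM : forall e, In e E -> 2 * y e <= M).
  { intros e He. pose proof (sumR_le_elem y E e (fun a _ => Hy0 a) He).
    pose proof (sumR_nonneg x E (fun a _ => Hx0 a)). pose proof (Hy0 e). unfold M; lra. }
  exists (fun e => if excluded_middle_informative (U (fst e) /\ ~ U (snd e)) then x e else M).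
  split.
  { intros e He. destruct (excluded_middle_informative _); auto.
    pose proof (HxM e He); pose proof (Hx0 e); lra. }
  exists x. split; [split|split].
  - intros e He. split; auto. destruct (excluded_middle_informative _); [lra|auto].
  - intros v Hv Hvs Hvt. apply (load_conserv E s t); auto.
  - intros p Hp. destruct (walk_cross U E s p t Hp HUs HUt) as [e [Hep He]].
    exists e. split; auto. destruct (excluded_middle_informative _); [auto|contradiction].
  - exists (fun e => (1 + eps) * y e). split; [split|].
    + intros e He. split. { pose proof (Hy0 e). nra. }
      destruct (excluded_middle_informative _) as [Hc|Hc]; auto.
      pose proof (HyM e He). pose proof (Hy0 e). nra.
    + intros v Hv Hvs Hvt. rewrite in_sum_scal, out_sum_scal. f_equal.
      apply (load_conserv E s t); auto.
    + unfold edge_flow_value. rewrite out_sum_scal.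
      unfold x, y. rewrite !(load_value E s t); auto. rewrite HvH, HvG. nra.
Qed.
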